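(* Let $B$ be a finite Blaschke product of degree $2$. If $M(B)\le 3$ then $m(B)\ge1$, and if $M(B)<3$ then $m(B)>1$. Equivalently: if the restriction of $z\mapsto z^3/B(z)$ to $\mathbb T$ is a homeomorphism of $\mathbb T$, then so is the restriction of $z\mapsto B(z)/z$; and if $z^3/B(z)$ is a diffeomorphism of $\mathbb T$, then so is $B(z)/z$.
   Context: A finite Blaschke product of degree $n$ is $B(z)=\alpha\prod_{k=1}^n \frac{z-a_k}{1-\overline{a_k}z}$ with $a_k\in\mathbb D=\{|z|<1\}$, $\alpha\in\mathbb T=\{|z|=1\}$; $M(B)=\sup_{|z|=1}|B'(z)|$, $m(B)=\inf_{|z|=1}|B'(z)|$. For a Blaschke product of degree $n$ it is known that $B(z)/z^{n-1}$ is a homeomorphism (resp. diffeomorphism) of $\mathbb T$ iff $m(B)\ge n-1$ (resp. $>n-1$), and $z^{n+1}/B(z)$ is a homeomorphism (resp. diffeomorphism) of $\mathbb T$ iff $M(B)\le n+1$ (resp. $<n+1$). *)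

(* Defs.v *)
From Stdlib Require Import Reals.
From Coquelicot Require Import Coquelicot.
Open Scope C_scope.

Definition blaschke_factor (a z : C) : C := (z - a) / (1 - Cconj a * z).

Definition blaschke2 (alpha a1 a2 : C) (z : C) : C :=
  alpha * blaschke_factor a1 z * blaschke_factor a2 z.

Definition Cderiv_is (f : C -> C) (z l : C) : Prop :=
  @is_derive C_AbsRing C_NormedModule f z l.

Definition deriv_mods_on_circle (f : C -> C) : R -> Prop :=
  fun r => exists z l, Cmod z = 1%R /\ Cderiv_is f z l /\ r = Cmod l.

Definition Msup (f : C -> C) : Rbar := Lub_Rbar (deriv_mods_on_circle f).
Definition minf (f : C -> C) : Rbar := Glb_Rbar (deriv_mods_on_circle f).

(* Main.v *)
Require Import Defs.
From Stdlib Require Import Reals Lra Psatz.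
From Coquelicot Require Import Coquelicot.
Open Scope C_scope.

Lemma Cmod2_id (z a : C) :
  (Cmod (1 - Cconj a * z) ^ 2 - Cmod (z - a) ^ 2 = (1 - Cmod z ^ 2) * (1 - Cmod a ^ 2))%R.
Proof.
  destruct z as [x y], a as [u v].
  rewrite !Cmod2_alt. unfold Cconj, Cminus, Cplus, Copp, Cmult, Re, Im. simpl. ring.
Qed.

Lemma Cmod_conj_circle (z : C) : Cmod z = 1%R -> z * Cconj z = 1.
Proof. intros H. rewrite <- Cmod2_conj, H. simpl. f_equal; ring. Qed.

Lemma csqrt_ex (w : C) : exists s : C, s * s = w.
Proof.
  destruct w as [x y].
  set (r := sqrt (x*x + y*y)).
  assert (Hr0 : (0 <= r)%R) by apply sqrt_pos.
  assert (Hr2 : (r * r = x*x + y*y)%R) by (apply sqrt_sqrt; nra).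
  assert (Hrx1 : (x <= r)%R) by nra.
  assert (Hrx2 : (- x <= r)%R) by nra.
  assert (H1 : (0 <= (r + x)/2)%R) by lra.
  assert (H2 : (0 <= (r - x)/2)%R) by lra.
  assert (Hp : (sqrt ((r+x)/2) * sqrt ((r-x)/2) = Rabs y / 2)%R).
  { rewrite <- sqrt_mult by lra.
    replace ((r + x) / 2 * ((r - x) / 2))%R with (y*y/4)%R by nra.
    rewrite <- (sqrt_Rsqr (Rabs y / 2)) by (generalize (Rabs_pos y); lra).
    f_equal. unfold Rsqr. unfold Rabs; destruct (Rcase_abs y); field. }
  destruct (Rle_or_lt 0 y) as [Hy|Hy].
  - exists (sqrt ((r+x)/2), sqrt ((r-x)/2)).
    unfold Cmult; simpl. f_equal.
    + rewrite !sqrt_sqrt by lra. lra.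
    + rewrite Rabs_right in Hp by lra. nra.
  - exists (sqrt ((r+x)/2), - sqrt ((r-x)/2))%R.
    unfold Cmult; simpl. f_equal.
    + replace (sqrt ((r + x) / 2) * sqrt ((r + x) / 2) - - sqrt ((r - x) / 2) * - sqrt ((r - x) / 2))%R
        with (sqrt ((r + x) / 2) * sqrt ((r + x) / 2) - sqrt ((r - x) / 2) * sqrt ((r - x) / 2))%R by ring.
      rewrite !sqrt_sqrt by lra. lra.
    + rewrite Rabs_left in Hp by lra. nra.
Qed.

Definition Pk (a z : C) : R := ((1 - Cmod a ^ 2) / Cmod (z - a) ^ 2)%R.
Definition Lt (a z : C) : C := z * (1 - Cconj a * a) / ((z - a) * (1 - Cconj a * z)).


Lemma ne_za (z a : C) : Cmod z = 1%R -> (Cmod a < 1)%R -> z - a <> 0.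
Proof. intros Hz Ha H. apply Ceq_minus in H. subst. lra. Qed.

Lemma ne_bz (z a : C) : (Cmod z <= 1)%R -> (Cmod a < 1)%R -> 1 - Cconj a * z <> 0.
Proof. intros Hz Ha H. apply Ceq_minus in H. symmetry in H.
  apply (f_equal Cmod) in H. rewrite Cmod_mult, Cmod_conj, Cmod_1 in H.
  generalize (Cmod_ge_0 a) (Cmod_ge_0 z). nra. Qed.

Lemma Lt_circle (a z : C) : Cmod z = 1%R -> (Cmod a < 1)%R -> Lt a z = RtoC (Pk a z).
Proof.
  intros Hz Ha.
  assert (H1 := ne_za z a Hz Ha). assert (H2 := ne_bz z a (Req_le _ _ Hz) Ha).
  assert (Hzz := Cmod_conj_circle z Hz).
  assert (Hm : Cmod (z - a) <> 0%R). { intro H. apply H1. apply Cmod_eq_0, H. }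
  unfold Pk, Lt. rewrite RtoC_div by (apply pow_nonzero; auto).
  rewrite RtoC_minus, !Cmod2_conj.
  assert (E : 1 - Cconj a * z = z * (Cconj z - Cconj a)).
  { rewrite <- Hzz at 1. ring. }
  rewrite E. rewrite Cminus_conj.
  assert (Hz0 : z <> 0). { intro H. subst. rewrite Cmod_0 in Hz. lra. }
  assert (Hc : Cconj z - Cconj a <> 0). { intro H. apply Hm. rewrite <- Cmod_conj, Cminus_conj, H. apply Cmod_0. }
  simpl. field. auto.
Qed.

Definition EE (a1 a2 z : C) : C := z * (z - a1) * (z - a2).
Definition DD (a1 a2 z : C) : C := (1 - Cconj a1 * z) * (1 - Cconj a2 * z).

Lemma Qp_rel (a1 a2 lam z : C) : z <> 0 -> z - a1 <> 0 -> z - a2 <> 0 ->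
  1 - Cconj a1 * z <> 0 -> 1 - Cconj a2 * z <> 0 -> EE a1 a2 z = lam * DD a1 a2 z ->
  z * (3 * z ^ 2 + 2 * (-(a1+a2) - lam * Cconj a1 * Cconj a2) * z + (a1 * a2 + lam * (Cconj a1 + Cconj a2)))
  = lam * DD a1 a2 z * (1 + Lt a1 z + Lt a2 z).
Proof.
  intros H0 H1 H2 H3 H4 HE.
  assert (Hl : lam = EE a1 a2 z / DD a1 a2 z).
  { rewrite HE. unfold DD. field. auto. }
  rewrite Hl. unfold EE, DD, Lt. field. auto.
Qed.

Lemma msym (x y : C) : x - y <> 0 -> y - x <> 0.
Proof. intros H H'. apply H. replace (x - y) with (- (y - x)) by ring. rewrite H'. ring. Qed.

Lemma lagr (z0 z1 z2 b1 b2 : C) : z0 <> 0 -> z1 <> 0 -> z2 <> 0 ->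
  z0 - z1 <> 0 -> z0 - z2 <> 0 -> z1 - z2 <> 0 ->
  (1 - (b1+b2)*z0 + b1*b2*z0^2) / (z0 * ((z0 - z1) * (z0 - z2)))
  + (1 - (b1+b2)*z1 + b1*b2*z1^2) / (z1 * ((z1 - z0) * (z1 - z2)))
  + (1 - (b1+b2)*z2 + b1*b2*z2^2) / (z2 * ((z2 - z0) * (z2 - z1)))
  = / (z0 * z1 * z2).
Proof.
  intros. field. repeat split; auto using msym.
Qed.

Lemma sq_eq_nonneg (x y : R) : (0 <= x)%R -> (0 <= y)%R -> (x ^ 2 = y ^ 2)%R -> x = y.
Proof. intros. nra. Qed.

Lemma circle_mod_eq (z a : C) : Cmod z = 1%R -> Cmod (1 - Cconj a * z) = Cmod (z - a).
Proof.
  intros Hz. apply sq_eq_nonneg; try apply Cmod_ge_0.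
  generalize (Cmod2_id z a). rewrite Hz. intros H. nra.
Qed.

Lemma prod_lt3 (x y1 y2 Y1 Y2 : R) : (0 <= x < 1)%R -> (0 <= y1 < Y1)%R -> (0 <= y2 < Y2)%R ->
  (x * y1 * y2 < Y1 * Y2)%R.
Proof. intros [Hx Hx1] [Hy1 HY1] [Hy2 HY2].
  assert (0 <= y1 * y2)%R by (apply Rmult_le_pos; auto).
  assert (x * (y1 * y2) <= 1 * (y1*y2))%R by (apply Rmult_le_compat_r; lra).
  assert (y1 * y2 <= Y1 * y2)%R by (apply Rmult_le_compat_r; lra).
  assert (Y1 * y2 < Y1 * Y2)%R by (apply Rmult_lt_compat_l; lra).
  rewrite Rmult_assoc. lra. Qed.

Lemma lt_of_sq (x y : R) : (0 <= x)%R -> (0 <= y)%R -> (x ^ 2 < y ^ 2)%R -> (x < y)%R.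
Proof. intros. nra. Qed.

Lemma on_circle (a1 a2 lam z : C) : (Cmod a1 < 1)%R -> (Cmod a2 < 1)%R -> Cmod lam = 1%R ->
  EE a1 a2 z = lam * DD a1 a2 z -> Cmod z = 1%R.
Proof.
  intros H1 H2 Hl HE. apply (f_equal Cmod) in HE.
  unfold EE, DD in HE. rewrite !Cmod_mult, Hl in HE.
  generalize (Cmod2_id z a1) (Cmod2_id z a2). intros E1 E2.
  generalize (Cmod_ge_0 z) (Cmod_ge_0 a1) (Cmod_ge_0 a2) (Cmod_ge_0 (z - a1)) (Cmod_ge_0 (z - a2))
    (Cmod_ge_0 (1 - Cconj a1 * z)) (Cmod_ge_0 (1 - Cconj a2 * z)).
  set (X := Cmod z) in *. set (y1 := Cmod (z - a1)) in *. set (y2 := Cmod (z - a2)) in *.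
  set (Y1 := Cmod (1 - Cconj a1 * z)) in *. set (Y2 := Cmod (1 - Cconj a2 * z)) in *.
  set (A1 := Cmod a1) in *. set (A2 := Cmod a2) in *.
  intros. destruct (Rtotal_order X 1) as [Hx|[Hx|Hx]]; auto; exfalso.
  - assert (y1 < Y1)%R. { apply lt_of_sq; auto. assert (0 < (1 - X^2) * (1 - A1^2))%R by (apply Rmult_lt_0_compat; nra). lra. }
    assert (y2 < Y2)%R. { apply lt_of_sq; auto. assert (0 < (1 - X^2) * (1 - A2^2))%R by (apply Rmult_lt_0_compat; nra). lra. }
    assert (X * y1 * y2 < Y1 * Y2)%R by (apply prod_lt3; lra). lra.
  - assert (Y1 < y1)%R. { apply lt_of_sq; auto. assert (0 < (X^2 - 1) * (1 - A1^2))%R by (apply Rmult_lt_0_compat; nra). lra. }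
    assert (Y2 < y2)%R. { apply lt_of_sq; auto. assert (0 < (X^2 - 1) * (1 - A2^2))%R by (apply Rmult_lt_0_compat; nra). lra. }
    assert (Y1 * Y2 <= Y1 * y2)%R by (apply Rmult_le_compat_l; lra).
    assert (Y1 * y2 < y1 * y2)%R by (apply Rmult_lt_compat_r; lra).
    assert (1 * y1 * y2 <= X * y1 * y2)%R. { apply Rmult_le_compat_r; auto. apply Rmult_le_compat_r; lra. }
    lra.
Qed.

Lemma Pk_pos (a z : C) : Cmod z = 1%R -> (Cmod a < 1)%R -> (0 < Pk a z)%R.
Proof.
  intros Hz Ha. unfold Pk. apply Rdiv_lt_0_compat.
  - generalize (Cmod_ge_0 a). nra.
  - apply pow_lt. apply Cmod_gt_0. apply ne_za; auto.
Qed.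

Lemma C2_nz : (2 : C) <> 0.
Proof. intro H. apply (f_equal Re) in H. simpl in H. lra. Qed.

Lemma Csub0 (x y : C) : x - y = 0 -> x = y.
Proof. apply Ceq_minus. Qed.

Lemma clark (a1 a2 z0 : C) : (Cmod a1 < 1)%R -> (Cmod a2 < 1)%R -> Cmod z0 = 1%R ->
  exists z1 z2 : C, Cmod z1 = 1%R /\ Cmod z2 = 1%R /\
    (/ (1 + (Pk a1 z0 + Pk a2 z0)) + / (1 + (Pk a1 z1 + Pk a2 z1)) + / (1 + (Pk a1 z2 + Pk a2 z2)) = 1)%R.
Proof.
  intros Ha1 Ha2 Hz0.
  assert (HD0 : DD a1 a2 z0 <> 0).
  { unfold DD. apply Cmult_neq_0; apply ne_bz; lra. }
  pose (lam := EE a1 a2 z0 / DD a1 a2 z0).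
  assert (Hlam1 : Cmod lam = 1%R).
  { unfold lam. rewrite Cmod_div by auto. unfold EE, DD. rewrite !Cmod_mult, Hz0.
    rewrite !circle_mod_eq by auto.
    assert (Cmod (z0 - a1) <> 0%R) by (intro H; apply (ne_za z0 a1); auto; apply Cmod_eq_0; auto).
    assert (Cmod (z0 - a2) <> 0%R) by (intro H'; apply (ne_za z0 a2); auto; apply Cmod_eq_0; auto).
    field. auto. }
  assert (Hlam0 : lam <> 0). { intro H. rewrite H, Cmod_0 in Hlam1. lra. }
  pose (c2 := -(a1+a2) - lam * Cconj a1 * Cconj a2).
  pose (c1 := a1 * a2 + lam * (Cconj a1 + Cconj a2)).
  pose (p := c2 + z0). pose (q := c1 + p * z0).
  destruct (csqrt_ex (p * p - 4 * q)) as [s Hs].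
  pose (z1 := (-p + s) / 2). pose (z2 := (-p - s) / 2).
  assert (Hpoly : forall z, EE a1 a2 z - lam * DD a1 a2 z = z^3 + c2 * z^2 + c1 * z - lam).
  { intro z. unfold EE, DD, c2, c1. ring. }
  assert (HE0 : EE a1 a2 z0 = lam * DD a1 a2 z0) by (unfold lam; field; auto).
  assert (Hlamv : lam = z0 * q).
  { assert (H := Hpoly z0). rewrite HE0 in H.
    assert (H' : lam = z0^3 + c2 * z0^2 + c1 * z0).
    { apply Csub0. replace (lam - (z0^3 + c2 * z0^2 + c1 * z0)) with (- (z0^3 + c2 * z0^2 + c1 * z0 - lam)) by ring.
      rewrite <- H. ring. }
    unfold q, p. rewrite H' at 1. ring. }
  assert (H12s : z1 + z2 = - p) by (unfold z1, z2; field; try apply C2_nz).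
  assert (H12p : z1 * z2 = q).
  { unfold z1, z2. replace ((- p + s) / 2 * ((- p - s) / 2)) with ((p * p - s * s) / 4)
      by (field; try apply C2_nz).
    rewrite Hs. field. }
  assert (Hc2 : c2 = -(z0 + z1 + z2)).
  { assert (Hp : p = -(z1+z2)) by (rewrite H12s; ring).
    replace c2 with (p - z0) by (unfold p; ring). rewrite Hp. ring. }
  assert (Hc1 : c1 = z0*z1 + z0*z2 + z1*z2).
  { replace c1 with (q - p * z0) by (unfold q; ring). rewrite <- H12p.
    replace p with (- (z1 + z2)) by (rewrite H12s; ring). ring. }
  assert (Hlz : lam = z0 * z1 * z2) by (rewrite Hlamv, <- H12p; ring).
  assert (Hfact : forall z, EE a1 a2 z - lam * DD a1 a2 z = (z - z0) * (z - z1) * (z - z2)).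
  { intro z. rewrite Hpoly, Hc2, Hc1, Hlz. ring. }
  assert (HE1 : EE a1 a2 z1 = lam * DD a1 a2 z1) by (apply Csub0; rewrite Hfact; ring).
  assert (HE2 : EE a1 a2 z2 = lam * DD a1 a2 z2) by (apply Csub0; rewrite Hfact; ring).
  assert (Hz1 : Cmod z1 = 1%R) by (apply (on_circle a1 a2 lam); auto).
  assert (Hz2 : Cmod z2 = 1%R) by (apply (on_circle a1 a2 lam); auto).
  exists z1, z2. split; [exact Hz1|]. split; [exact Hz2|].
  assert (Hgen : forall z, Cmod z = 1%R -> EE a1 a2 z = lam * DD a1 a2 z ->
     z * (3 * z ^ 2 + 2 * c2 * z + c1) = lam * DD a1 a2 z * RtoC (1 + (Pk a1 z + Pk a2 z)) /\
     z <> 0 /\ DD a1 a2 z <> 0 /\ (0 < 1 + (Pk a1 z + Pk a2 z))%R).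
  { intros z Hz HE.
    assert (Hzn : z <> 0). { intro H. rewrite H, Cmod_0 in Hz. lra. }
    assert (HDn : DD a1 a2 z <> 0). { unfold DD. apply Cmult_neq_0; apply ne_bz; lra. }
    assert (Hpos := Pk_pos a1 z Hz Ha1). assert (Hpos2 := Pk_pos a2 z Hz Ha2).
    split; [| split; [auto | split; [auto | lra]]].
    rewrite RtoC_plus, RtoC_plus, <- (Lt_circle a1 z), <- (Lt_circle a2 z) by auto.
    unfold c2, c1. rewrite (Cplus_assoc 1). apply Qp_rel; auto; [apply ne_za; auto | apply ne_za; auto | apply ne_bz; [lra|auto] | apply ne_bz; [lra|auto]]. }
  destruct (Hgen z0 Hz0 HE0) as [Q0 [N0 [D0 P0]]].
  destruct (Hgen z1 Hz1 HE1) as [Q1 [N1 [D1 P1]]].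
  destruct (Hgen z2 Hz2 HE2) as [Q2 [N2 [D2 P2]]].
  clear Hgen.
  assert (Hd : forall z, 3 * z ^ 2 + 2 * c2 * z + c1 = (z - z1) * (z - z2) + (z - z0) * (z - z2) + (z - z0) * (z - z1)).
  { intro z. rewrite Hc2, Hc1. ring. }
  rewrite Hd in Q0, Q1, Q2.
  assert (Hr0 : RtoC (1 + (Pk a1 z0 + Pk a2 z0)) <> 0).
  { intro H. apply (f_equal Re) in H. simpl in H. lra. }
  assert (Hr1 : RtoC (1 + (Pk a1 z1 + Pk a2 z1)) <> 0).
  { intro H. apply (f_equal Re) in H. simpl in H. lra. }
  assert (Hr2 : RtoC (1 + (Pk a1 z2 + Pk a2 z2)) <> 0).
  { intro H. apply (f_equal Re) in H. simpl in H. lra. }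
  set (R0 := RtoC (1 + (Pk a1 z0 + Pk a2 z0))) in *.
  set (R1 := RtoC (1 + (Pk a1 z1 + Pk a2 z1))) in *.
  set (R2 := RtoC (1 + (Pk a1 z2 + Pk a2 z2))) in *.
  assert (Q0' : z0 * ((z0 - z1) * (z0 - z2)) = lam * DD a1 a2 z0 * R0) by (rewrite <- Q0; ring).
  assert (Q1' : z1 * ((z1 - z0) * (z1 - z2)) = lam * DD a1 a2 z1 * R1) by (rewrite <- Q1; ring).
  assert (Q2' : z2 * ((z2 - z0) * (z2 - z1)) = lam * DD a1 a2 z2 * R2) by (rewrite <- Q2; ring).
  clear Q0 Q1 Q2.
  assert (NZ0 : lam * DD a1 a2 z0 * R0 <> 0) by (apply Cmult_neq_0; [apply Cmult_neq_0|]; auto).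
  assert (NZ1 : lam * DD a1 a2 z1 * R1 <> 0) by (apply Cmult_neq_0; [apply Cmult_neq_0|]; auto).
  assert (d01 : z0 - z1 <> 0) by (intro H; apply NZ0; rewrite <- Q0', H; ring).
  assert (d02 : z0 - z2 <> 0) by (intro H; apply NZ0; rewrite <- Q0', H; ring).
  assert (d12 : z1 - z2 <> 0) by (intro H; apply NZ1; rewrite <- Q1', H; ring).
  assert (I0 : / R0 = lam * DD a1 a2 z0 / (z0 * ((z0 - z1) * (z0 - z2)))).
  { rewrite Q0'. field. repeat split; auto. }
  assert (I1 : / R1 = lam * DD a1 a2 z1 / (z1 * ((z1 - z0) * (z1 - z2)))).
  { rewrite Q1'. field. repeat split; auto. }
  assert (I2 : / R2 = lam * DD a1 a2 z2 / (z2 * ((z2 - z0) * (z2 - z1)))).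
  { rewrite Q2'. field. repeat split; auto. }
  assert (HDD : forall z, DD a1 a2 z = 1 - (Cconj a1 + Cconj a2) * z + Cconj a1 * Cconj a2 * z ^ 2)
    by (intro z; unfold DD; ring).
  assert (Hc : / R0 + / R1 + / R2 = 1).
  { rewrite I0, I1, I2, !HDD.
    transitivity (lam * (
      (1 - (Cconj a1 + Cconj a2)*z0 + Cconj a1*Cconj a2*z0^2) / (z0 * ((z0 - z1) * (z0 - z2)))
    + (1 - (Cconj a1 + Cconj a2)*z1 + Cconj a1*Cconj a2*z1^2) / (z1 * ((z1 - z0) * (z1 - z2)))
    + (1 - (Cconj a1 + Cconj a2)*z2 + Cconj a1*Cconj a2*z2^2) / (z2 * ((z2 - z0) * (z2 - z1))))).
    { field. repeat split; auto using msym. }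
    rewrite lagr by auto. rewrite Hlz. field. repeat split; auto. }
  unfold R0, R1, R2 in Hc. rewrite <- !RtoC_inv in Hc by lra.
  rewrite <- !RtoC_plus in Hc. apply (f_equal Re) in Hc. simpl in Hc. exact Hc.
Qed.
Lemma sqrt2_lt2 : (sqrt 2 < 2)%R.
Proof. rewrite <- (sqrt_Rsqr 2) at 2 by lra. apply sqrt_lt_1; unfold Rsqr; lra. Qed.

Lemma is_derive_Cinv (z0 : C) : z0 <> 0 ->
  @is_derive C_AbsRing C_NormedModule Cinv z0 (- / (z0 * z0)).
Proof.
  intros Hz0. split.
  { apply is_linear_scal_l. }
  intros x Hx. apply (@is_filter_lim_locally_unique C_AbsRing (AbsRing_NormedModule C_AbsRing)) in Hx. subst x.
  intros eps.
  assert (Hm : (0 < Cmod z0)%R) by (apply Cmod_gt_0; auto).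
  set (m := Cmod z0) in *.
  assert (Hd : (0 < Rmin (m / 4) (eps * m ^ 3 / 4))%R).
  { apply Rmin_glb_lt. lra. apply Rmult_lt_0_compat; [apply Rmult_lt_0_compat|]; try lra. apply cond_pos. apply pow_lt; lra. }
  exists (mkposreal _ Hd). intros y Hy.
  assert (Hy' : (Cmod (y - z0) < Rmin (m / 4) (eps * m ^ 3 / 4))%R) by exact Hy. clear Hy.
  assert (Hmin1 := Rmin_l (m / 4) (eps * m ^ 3 / 4)).
  assert (Hmin2 := Rmin_r (m / 4) (eps * m ^ 3 / 4)).
  set (d := Rmin (m / 4) (eps * m ^ 3 / 4)) in *.
  assert (Hyz : (Cmod (y - z0) < 2 * d)%R) by lra.
  assert (Hy0 : (m / 2 < Cmod y)%R).
  { generalize (Cmod_triangle y (z0 - y)). replace (y + (z0 - y)) with z0 by ring.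
    assert (Cmod (z0 - y) = Cmod (y - z0)) by (rewrite <- Cmod_opp; f_equal; ring).
    fold m. intros. lra. }
  assert (Hyn : @eq C y (RtoC 0) -> False). { intro H. rewrite H, Cmod_0 in Hy0. lra. }
  change (Cmod (/ y - / z0 - (y - z0) * (- / (z0 * z0))) <= eps * Cmod (y - z0))%R.
  replace (/ y - / z0 - (y - z0) * (- / (z0 * z0))) with ((y - z0) * (y - z0) / (z0 * z0 * y))
    by (field; auto).
  rewrite Cmod_div by (apply Cmult_neq_0; [apply Cmult_neq_0|]; auto).
  rewrite !Cmod_mult. fold m.
  set (e := Cmod (y - z0)) in *. set (w := Cmod y) in *.
  assert (He : (0 <= e)%R) by apply Cmod_ge_0.
  apply Rle_div_l. apply Rmult_lt_0_compat; [apply Rmult_lt_0_compat|]; lra.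
  assert (e * e <= e * (2 * d))%R by (apply Rmult_le_compat_l; lra).
  assert (e * (2*d) <= e * (eps * m ^ 3 / 2))%R by (apply Rmult_le_compat_l; lra).
  assert (e * (eps * m^3/2) <= eps * e * (m * m * w))%R.
  { replace (eps * e * (m*m*w))%R with (e * (eps * m * m * w))%R by ring.
    apply Rmult_le_compat_l; auto.
    replace (eps * m ^ 3 / 2)%R with (eps * m * m * (m/2))%R by (simpl; field).
    apply Rmult_le_compat_l. apply Rmult_le_pos; [apply Rmult_le_pos|]; try lra.
    left; apply cond_pos. lra. }
  lra.
Qed.

Lemma Cd_ext (f g : C -> C) (z l l' : C) : (forall y, f y = g y) -> l = l' -> Cderiv_is f z l -> Cderiv_is g z l'.
Proof. intros H Hl Hd. subst. unfold Cderiv_is. apply (is_derive_ext f g); auto. Qed.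

Lemma Cd_tr1 (f : C -> C) (z l : C) : @is_derive C_AbsRing (AbsRing_NormedModule C_AbsRing) f z l -> Cderiv_is f z l.
Proof.
  unfold Cderiv_is, is_derive, filterdiff. intros [[H1 H2 H3] Hd]. split.
  - constructor; [exact H1 | exact H2 | exact H3].
  - exact Hd.
Qed.

Lemma Cd_tr2 (f : C -> C) (z l : C) : Cderiv_is f z l -> @is_derive C_AbsRing (AbsRing_NormedModule C_AbsRing) f z l.
Proof.
  unfold Cderiv_is, is_derive, filterdiff. intros [[H1 H2 H3] Hd]. split.
  - constructor; [exact H1 | exact H2 | exact H3].
  - exact Hd.
Qed.

Lemma Cd_mult (f g : C -> C) (z df dg : C) : Cderiv_is f z df -> Cderiv_is g z dg ->
  Cderiv_is (fun y => f y * g y) z (df * g z + f z * dg).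
Proof.
  intros Hf Hg. unfold Cderiv_is in *.
  apply Cd_tr2 in Hf. apply Cd_tr2 in Hg. apply Cd_tr1.
  apply (@is_derive_mult C_AbsRing f g z df dg Hf Hg). intros. apply Cmult_comm.
Qed.

Lemma Cd_const (c z : C) : Cderiv_is (fun _ => c) z 0.
Proof. apply (@is_derive_const C_AbsRing C_NormedModule). Qed.

Lemma Cd_id (z : C) : Cderiv_is (fun y => y) z 1.
Proof. apply Cd_tr1. exact (@is_derive_id C_AbsRing z). Qed.

Lemma Cd_comp (f g : C -> C) (z df dg : C) : Cderiv_is f (g z) df -> Cderiv_is g z dg ->
  Cderiv_is (fun y => f (g y)) z (dg * df).
Proof. intros Hf Hg. exact (@is_derive_comp C_AbsRing C_NormedModule f g z df dg Hf (Cd_tr2 _ _ _ Hg)). Qed.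

Lemma Cd_plus (f g : C -> C) (z df dg : C) : Cderiv_is f z df -> Cderiv_is g z dg ->
  Cderiv_is (fun y => f y + g y) z (df + dg).
Proof. intros Hf Hg. apply (@is_derive_plus C_AbsRing C_NormedModule f g z df dg Hf Hg). Qed.

Lemma Cd_inv (z : C) : z <> 0 -> Cderiv_is Cinv z (- / (z * z)).
Proof. apply is_derive_Cinv. Qed.

Lemma Cd_bf (a z : C) : 1 - Cconj a * z <> 0 ->
  Cderiv_is (blaschke_factor a) z ((1 - Cconj a * a) / (1 - Cconj a * z) ^ 2).
Proof.
  intros Hn.
  assert (h1 : Cderiv_is (fun y => y + - a) z (1 + 0)) by (apply Cd_plus; [apply Cd_id | apply Cd_const]).
  assert (h2 : Cderiv_is (fun y => 1 + (- Cconj a) * y) z (0 + (0 * z + (- Cconj a) * 1))).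
  { apply Cd_plus; [apply Cd_const|]. apply (Cd_mult (fun _ => - Cconj a) (fun y => y)); [apply Cd_const | apply Cd_id]. }
  assert (h3 : Cderiv_is (fun y => / (1 + (- Cconj a) * y)) z
                 ((0 + (0 * z + (- Cconj a) * 1)) * (- / ((1 + (- Cconj a) * z) * (1 + (- Cconj a) * z))))).
  { apply (Cd_comp Cinv (fun y => 1 + (- Cconj a) * y)); auto.
    apply Cd_inv. replace (1 + - Cconj a * z) with (1 - Cconj a * z) by ring. auto. }
  assert (h4 := Cd_mult _ _ _ _ _ h1 h3).
  eapply Cd_ext; [| | exact h4].
  - intro y. unfold blaschke_factor. simpl. unfold Cdiv. f_equal. f_equal. ring.
  - simpl. replace (1 + - Cconj a * z) with (1 - Cconj a * z) by ring. field. auto.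
Qed.

Definition dB (alpha a1 a2 z : C) : C :=
  alpha * ((1 - Cconj a1 * a1) / (1 - Cconj a1 * z) ^ 2 * blaschke_factor a2 z
   + blaschke_factor a1 z * ((1 - Cconj a2 * a2) / (1 - Cconj a2 * z) ^ 2)).

Lemma Cd_B (alpha a1 a2 z : C) : 1 - Cconj a1 * z <> 0 -> 1 - Cconj a2 * z <> 0 ->
  Cderiv_is (blaschke2 alpha a1 a2) z (dB alpha a1 a2 z).
Proof.
  intros H1 H2.
  assert (h := Cd_mult _ _ _ _ _ (Cd_mult _ _ _ _ _ (Cd_const alpha z) (Cd_bf a1 z H1)) (Cd_bf a2 z H2)).
  eapply Cd_ext; [| | exact h].
  - intro y. reflexivity.
  - unfold dB. ring.
Qed.

Lemma mod_dB (alpha a1 a2 z : C) : Cmod alpha = 1%R -> (Cmod a1 < 1)%R -> (Cmod a2 < 1)%R -> Cmod z = 1%R ->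
  Cmod (dB alpha a1 a2 z) = (Pk a1 z + Pk a2 z)%R.
Proof.
  intros Hal H1 H2 Hz.
  assert (Hz0 : z <> 0). { intro H. rewrite H, Cmod_0 in Hz. lra. }
  assert (n1 := ne_za z a1 Hz H1). assert (n2 := ne_za z a2 Hz H2).
  assert (d1 := ne_bz z a1 (Req_le _ _ Hz) H1). assert (d2 := ne_bz z a2 (Req_le _ _ Hz) H2).
  assert (E : dB alpha a1 a2 z = alpha * blaschke_factor a1 z * blaschke_factor a2 z * (Lt a1 z + Lt a2 z) / z).
  { unfold dB, blaschke_factor, Lt. field. repeat split; auto. }
  rewrite E, (Lt_circle a1 z Hz H1), (Lt_circle a2 z Hz H2), <- RtoC_plus.
  rewrite Cmod_div by auto. rewrite !Cmod_mult, Hal, Hz, Cmod_R.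
  unfold blaschke_factor. rewrite !Cmod_div by auto.
  rewrite !circle_mod_eq by auto.
  assert (Cmod (z - a1) <> 0%R) by (intro Hq; apply n1; apply Cmod_eq_0; auto).
  assert (Cmod (z - a2) <> 0%R) by (intro Hq; apply n2; apply Cmod_eq_0; auto).
  rewrite Rabs_right by (generalize (Pk_pos a1 z Hz H1) (Pk_pos a2 z Hz H2); lra).
  field. auto.
Qed.

Lemma set_char (alpha a1 a2 : C) : Cmod alpha = 1%R -> (Cmod a1 < 1)%R -> (Cmod a2 < 1)%R ->
  forall r, deriv_mods_on_circle (blaschke2 alpha a1 a2) r <-> exists z, Cmod z = 1%R /\ r = (Pk a1 z + Pk a2 z)%R.
Proof.
  intros Hal H1 H2 r. split.
  - intros [z [l [Hz [Hd Hr]]]]. exists z. split; auto.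
    assert (Hd' := Cd_B alpha a1 a2 z (ne_bz z a1 (Req_le _ _ Hz) H1) (ne_bz z a2 (Req_le _ _ Hz) H2)).
    assert (l = dB alpha a1 a2 z).
    { apply is_C_derive_unique in Hd. apply is_C_derive_unique in Hd'. congruence. }
    subst. apply mod_dB; auto.
  - intros [z [Hz Hr]]. exists z, (dB alpha a1 a2 z). split; auto. split.
    + apply Cd_B; apply ne_bz; auto; lra.
    + rewrite mod_dB; auto.
Qed.

Lemma real_fin (f0 f1 f2 : R) : (0 < f0)%R -> (0 < f1)%R -> (0 < f2)%R -> (f2 <= f1)%R ->
  (/ (1 + f0) + / (1 + f1) + / (1 + f2) = 1)%R -> (2 <= (f1 - 1) * f0)%R.
Proof.
  intros h0 h1 h2 h21 H.
  assert (/ (1 + f1) <= / (1 + f2))%R by (apply Rinv_le_contravar; lra).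
  assert (Hk : (2 * / (1 + f1) <= 1 - / (1 + f0))%R) by lra.
  replace (1 - / (1 + f0))%R with (f0 / (1 + f0))%R in Hk by (field; lra).
  apply (Rmult_le_compat_r ((1 + f1) * (1 + f0))) in Hk; [| apply Rmult_le_pos; lra].
  replace (2 * / (1 + f1) * ((1 + f1) * (1 + f0)))%R with (2 * (1 + f0))%R in Hk by (field; lra).
  replace (f0 / (1 + f0) * ((1 + f1) * (1 + f0)))%R with (f0 * (1 + f1))%R in Hk by (field; lra).
  nra.
Qed.

Lemma key (a1 a2 z0 : C) : (Cmod a1 < 1)%R -> (Cmod a2 < 1)%R -> Cmod z0 = 1%R ->
  exists z', Cmod z' = 1%R /\ (2 <= (Pk a1 z' + Pk a2 z' - 1) * (Pk a1 z0 + Pk a2 z0))%R.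
Proof.
  intros H1 H2 Hz0.
  destruct (clark a1 a2 z0 H1 H2 Hz0) as [z1 [z2 [Hz1 [Hz2 Hs]]]].
  assert (p0 := Pk_pos a1 z0 Hz0 H1). assert (q0 := Pk_pos a2 z0 Hz0 H2).
  assert (p1 := Pk_pos a1 z1 Hz1 H1). assert (q1 := Pk_pos a2 z1 Hz1 H2).
  assert (p2 := Pk_pos a1 z2 Hz2 H1). assert (q2 := Pk_pos a2 z2 Hz2 H2).
  destruct (Rle_or_lt (Pk a1 z2 + Pk a2 z2) (Pk a1 z1 + Pk a2 z1)) as [h|h].
  - exists z1. split; auto. apply (real_fin _ _ (Pk a1 z2 + Pk a2 z2)); auto; lra.
  - exists z2. split; auto. apply (real_fin _ _ (Pk a1 z1 + Pk a2 z1)); try lra.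
    all: rewrite <- Hs; ring.
Qed.

Theorem corollary3 (alpha a1 a2 : C) :
  Cmod alpha = 1%R -> (Cmod a1 < 1)%R -> (Cmod a2 < 1)%R ->
  (Rbar_le (Msup (blaschke2 alpha a1 a2)) 3%R ->
     Rbar_le 1%R (minf (blaschke2 alpha a1 a2))) /\
  (Rbar_lt (Msup (blaschke2 alpha a1 a2)) 3%R ->
     Rbar_lt 1%R (minf (blaschke2 alpha a1 a2))).
Proof.
  intros Hal H1 H2.
  assert (HS := set_char alpha a1 a2 Hal H1 H2).
  set (S := deriv_mods_on_circle (blaschke2 alpha a1 a2)) in *.
  unfold Msup, minf. fold S.
  destruct (Lub_Rbar_correct S) as [Hub _].
  destruct (Glb_Rbar_correct S) as [_ Hglb].
  
  assert (Hin : forall z, Cmod z = 1%R -> S (Pk a1 z + Pk a2 z)%R).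
  { intros z Hz. apply HS. exists z; auto. }
  assert (Hc1 : Cmod 1 = 1%R) by apply Cmod_1.
  split.
  - intros HL. apply Hglb. intros y Hy. apply HS in Hy. destruct Hy as [z0 [Hz0 ->]].
    destruct (key a1 a2 z0 H1 H2 Hz0) as [z' [Hz' Hk]].
    assert (Hle : Rbar_le (Pk a1 z' + Pk a2 z')%R 3%R) by (eapply Rbar_le_trans; [apply Hub, Hin, Hz' | exact HL]).
    simpl in Hle. simpl.
    assert (p0 := Pk_pos a1 z0 Hz0 H1). assert (q0 := Pk_pos a2 z0 Hz0 H2). nra.
  - intros HL.
    assert (Hbound : exists c, (c < 3)%R /\ forall z, Cmod z = 1%R -> (Pk a1 z + Pk a2 z <= c)%R).
    { destruct (Lub_Rbar S) as [l| |] eqn:EL.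
      - exists l. split; [exact HL|]. intros z Hz. assert (h := Hub _ (Hin z Hz)). try rewrite EL in h; exact h.
      - simpl in HL. contradiction.
      - exfalso. assert (h := Hub _ (Hin 1 Hc1)). try rewrite EL in h; exact h. }
    destruct Hbound as [c [Hc Hbd]].
    assert (Hc1' : (1 < c)%R).
    { destruct (key a1 a2 1 H1 H2 Hc1) as [z' [Hz' Hk]].
      assert (h := Hbd z' Hz').
      assert (p0 := Pk_pos a1 1 Hc1 H1). assert (q0 := Pk_pos a2 1 Hc1 H2). nra. }
    apply Rbar_lt_le_trans with (2 / (c - 1))%R.
    + simpl. apply Rmult_lt_reg_r with (c - 1)%R; [lra|]. field_simplify; lra.
    + apply Hglb. intros y Hy. apply HS in Hy. destruct Hy as [z0 [Hz0 ->]].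
      destruct (key a1 a2 z0 H1 H2 Hz0) as [z' [Hz' Hk]].
      assert (h := Hbd z' Hz').
      assert (p0 := Pk_pos a1 z0 Hz0 H1). assert (q0 := Pk_pos a2 z0 Hz0 H2).
      simpl. apply Rmult_le_reg_r with (c - 1)%R; [lra|].
      replace (2 / (c - 1) * (c - 1))%R with 2%R by (field; lra). nra.
Qed.
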